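(* Assume $\gamma$-separability. Fix $h\in\{2,\dots,H+1\}$ and let $\nu$ be a distribution on $\mathcal{S}_{h-1}\times\mathcal{A}$ with $\nu(s,a)\ge\tau$ for all $(s,a)\in\mathcal{S}_{h-1}\times\mathcal{A}$, where $\tau>0$. Then for any distinct $s_1',s_2'\in\mathcal{S}_h$ (each reachable from some pair in $\mathcal{S}_{h-1}\times\mathcal{A}$), $$\|\mathbf{b}_\nu(s_1')-\mathbf{b}_\nu(s_2')\|_1\ge\frac{\tau\gamma}{2}.$$
   Context: In a block MDP with finite latent levels $\mathcal{S}_1,\dots,\mathcal{S}_{H+1}$, finite action set $\mathcal{A}$ with $|\mathcal{A}|=K$, $|\mathcal{S}_h|\le M$, and transition kernel $p(s'\mid s,a)$ (with $p(\cdot\mid s,a)$ supported on $\mathcal{S}_{h}$ for $s\in\mathcal{S}_{h-1}$): for a distribution $\nu$ on $\mathcal{S}_{h-1}\times\mathcal{A}$ and $s'\in\mathcal{S}_h$, $b_\nu(s,a\mid s')=\frac{p(s'\mid s,a)\nu(s,a)}{\sum_{\tilde s,\tilde a}p(s'\mid\tilde s,\tilde a)\nu(\tilde s,\tilde a)}$, and $\mathbf{b}_\nu(s')\in\mathbb{R}^{MK}$ is the vector of these values indexed by $(s,a)\in\mathcal{S}_{h-1}\times\mathcal{A}$, zero-padded. $\gamma$-separability: there is $\gamma>0$ such that for every $h\in\{2,\dots,H+1\}$ and distinct $s',s''\in\mathcal{S}_h$, $\|\mathbf{b}_U(s')-\mathbf{b}_U(s'')\|_1\ge\gamma$, where $U$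 is the uniform distribution on $\mathcal{S}_{h-1}\times\mathcal{A}$. *)

(* Defs.v *)
From HB Require Import structures.
From mathcomp Require Import all_boot all_order all_algebra.
Set Implicit Arguments. Unset Strict Implicit. Unset Printing Implicit Defensive.
Import Order.TTheory GRing.Theory Num.Theory.
Local Open Scope ring_scope.

(* Convention: the latent levels are S 1, ..., S (H+1) (S : nat -> finType);
   p k s a s' is the transition probability p(s' | s, a) from s : S k to
   s' : S k.+1.  The paper's level h corresponds to k.+1 here (k = h - 1). *)

Section BlockMDP.
Variables (R : realFieldType) (S : nat -> finType) (A : finType).
Variable p : forall k : nat, S k -> A -> S k.+1 -> R.

Definition bwd (k : nat) (nu : S k -> A -> R) (s' : S k.+1) (s : S k) (a : A) : R :=
  p s a s' * nu s a / (\sum_(t : S k) \sum_(c : A) p t c s' * nu t c).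

(* ||b_nu(s1') - b_nu(s2')||_1 : l1 norm of the (zero-padded) vectors
   indexed by S k x A; the padding coordinates contribute 0. *)
Definition bdist (k : nat) (nu : S k -> A -> R) (s1 s2 : S k.+1) : R :=
  \sum_(s : S k) \sum_(a : A) `|bwd nu s1 s a - bwd nu s2 s a|.

Definition unif (k : nat) : S k -> A -> R :=
  fun _ _ => (#|S k| * #|A|)%:R^-1.

Definition reachable (k : nat) (s' : S k.+1) : Prop :=
  exists (s : S k) (a : A), 0 < p s a s'.

Definition is_kernel (H : nat) : Prop :=
  forall k, (1 <= k <= H)%N ->
    (forall (s : S k) (a : A) (s' : S k.+1), 0 <= p s a s') /\ (forall s a, \sum_(s' : S k.+1) p s a s' = 1).

Definition separable (H : nat) (gamma : R) : Prop :=
  0 < gamma /\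
  forall k, (1 <= k <= H)%N -> forall s1 s2 : S k.+1,
    s1 != s2 -> reachable s1 -> reachable s2 -> gamma <= bdist (@unif k) s1 s2.

Definition is_distr (k : nat) (nu : S k -> A -> R) : Prop :=
  (forall s a, 0 <= nu s a) /\ \sum_(s : S k) \sum_(a : A) nu s a = 1.

End BlockMDP.

(* Main.v *)
Require Import Defs.
From HB Require Import structures.
From mathcomp Require Import all_boot all_order all_algebra.
From mathcomp Require Import ring lra.
Import Order.TTheory GRing.Theory Num.Theory.
Local Open Scope ring_scope.

Section K.
Variables (R : realFieldType) (I J : finType).

Lemma dsum_ge (F : I -> J -> R) i0 j0 :
  (forall i j, 0 <= F i j) -> F i0 j0 <= \sum_i \sum_j F i j.
Proof.
move=> F0; rewrite (bigD1 i0) //= (bigD1 j0) //=.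
rewrite -addrA lerDl addr_ge0 //; first by apply: sumr_ge0 => j _; exact: F0.
by apply: sumr_ge0 => i _; apply: sumr_ge0 => j _; exact: F0.
Qed.

Lemma dsum_gt0 (F : I -> J -> R) i0 j0 :
  (forall i j, 0 <= F i j) -> 0 < F i0 j0 -> 0 < \sum_i \sum_j F i j.
Proof. by move=> F0 Fp; apply: lt_le_trans Fp (dsum_ge F i0 j0 F0). Qed.

Lemma key_le (x y nu : I -> J -> R) (tau : R) :
  (forall i j, 0 <= x i j) -> (forall i j, 0 <= y i j) ->
  \sum_i \sum_j x i j = 1 -> \sum_i \sum_j y i j = 1 ->
  0 < tau -> (forall i j, tau <= nu i j) -> (forall i j, nu i j <= 1) ->
  let al := \sum_i \sum_j x i j * nu i j in
  let be := \sum_i \sum_j y i j * nu i j in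
  be <= al ->
  tau * (\sum_i \sum_j `|x i j - y i j|) / 2 <=
  \sum_i \sum_j `|x i j * nu i j / al - y i j * nu i j / be|.
Proof.
move=> x0 y0 sx sy tau0 ntau nu1 al be leba.
have nu0 i j : 0 < nu i j by apply: lt_le_trans (ntau i j).
have bep : tau <= be.
  rewrite -[tau]mulr1 -sy mulr_sumr; apply: ler_sum => i _; rewrite mulr_sumr;
  apply: ler_sum => j _; rewrite mulrC; exact: ler_wpM2l.
have be1 : be <= 1.
  rewrite -sy; apply: ler_sum => i _; apply: ler_sum => j _.
  by rewrite -[leRHS]mulr1 ler_wpM2l.
have bp : 0 < be by apply: lt_le_trans bep.
have ap : 0 < al by apply: lt_le_trans leba.
set c := be / al.
have c0 : 0 <= c by rewrite divr_ge0 // ltW.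
have c1 : c <= 1 by rewrite ler_pdivrMr // mul1r.
set Sm := \sum_i \sum_j `|c * x i j - y i j|.
have S1 : 1 - c <= Sm.
  have -> : 1 - c = \sum_i \sum_j (y i j - c * x i j).
    rewrite (eq_bigr (fun i => \sum_j y i j - c * \sum_j x i j)); last first.
      by move=> i _; rewrite sumrB mulr_sumr.
    by rewrite sumrB -mulr_sumr sx sy mulr1.
  apply: ler_sum => i _; apply: ler_sum => j _; rewrite distrC; exact: ler_norm.
have S2 : \sum_i \sum_j `|x i j - y i j| <= (1 - c) + Sm.
  have -> : 1 - c = \sum_i \sum_j ((1 - c) * x i j).
    rewrite (eq_bigr (fun i => (1 - c) * \sum_j x i j)); last first.
      by move=> i _; rewrite mulr_sumr.
    by rewrite -mulr_sumr sx mulr1.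
  rewrite -big_split /=; apply: ler_sum => i _; rewrite -big_split /=.
  apply: ler_sum => j _.
  have -> : (1 - c) * x i j = `|x i j - c * x i j|.
    by rewrite ger0_norm ?mulrBl ?mul1r // -{1}[x i j]mul1r -mulrBl mulr_ge0 // subr_ge0.
  have -> : x i j - y i j = (x i j - c * x i j) + (c * x i j - y i j) by ring.
  exact: ler_normD.
have step1 : tau * Sm <= tau * Sm / be.
  rewrite ler_pdivlMr // ler_piMr //; apply: mulr_ge0; first exact: ltW.
  by apply: sumr_ge0 => i _; apply: sumr_ge0.
have step2 : Sm / be = \sum_i \sum_j `|x i j / al - y i j / be|.
  rewrite mulr_suml; apply: eq_bigr => i _; rewrite mulr_suml; apply: eq_bigr => j _.
  have ib : 0 <= be^-1 by rewrite invr_ge0 ltW.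
  have -> : x i j / al - y i j / be = (c * x i j - y i j) * be^-1.
    by rewrite /c; field; apply/andP; split; apply/lt0r_neq0.
  by rewrite normrM (ger0_norm ib).
apply: (le_trans (y := tau * Sm)).
  have : 0 <= tau * Sm - tau * (\sum_i \sum_j `|x i j - y i j|) / 2.
    have : \sum_i \sum_j `|x i j - y i j| <= 2 * Sm by lra.
    move=> h; have := ltW tau0; nra.
  by rewrite subr_ge0.
apply: (le_trans step1); rewrite -mulrA step2 mulr_sumr; apply: ler_sum => i _.
rewrite mulr_sumr; apply: ler_sum => j _.
have -> : x i j * nu i j / al - y i j * nu i j / be = nu i j * (x i j / al - y i j / be).
  by rewrite mulrBr !mulrA ![nu i j * _]mulrC.
rewrite normrM (ger0_norm (ltW (nu0 i j))); exact: ler_wpM2r.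
Qed.

Lemma key (x y nu : I -> J -> R) (tau : R) :
  (forall i j, 0 <= x i j) -> (forall i j, 0 <= y i j) ->
  \sum_i \sum_j x i j = 1 -> \sum_i \sum_j y i j = 1 ->
  0 < tau -> (forall i j, tau <= nu i j) -> (forall i j, nu i j <= 1) ->
  tau * (\sum_i \sum_j `|x i j - y i j|) / 2 <=
  \sum_i \sum_j `|x i j * nu i j / (\sum_i \sum_j x i j * nu i j)
                 - y i j * nu i j / (\sum_i \sum_j y i j * nu i j)|.
Proof.
move=> x0 y0 sx sy t0 nt n1.
case: (lerP (\sum_i \sum_j y i j * nu i j) (\sum_i \sum_j x i j * nu i j)) => h.
  exact: key_le.
have := @key_le y x nu tau y0 x0 sy sx t0 nt n1 (ltW h).
have E (f g : I -> J -> R) : \sum_i \sum_j `|f i j - g i j| = \sum_i \sum_j `|g i j - f i j|.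
  by apply: eq_bigr => i _; apply: eq_bigr => j _; rewrite distrC.
by rewrite E (E (fun i j => _ / _)).
Qed.

Lemma keyP (P1 P2 nu : I -> J -> R) (tau g : R) :
  (forall i j, 0 <= P1 i j) -> (forall i j, 0 <= P2 i j) ->
  0 < \sum_i \sum_j P1 i j -> 0 < \sum_i \sum_j P2 i j ->
  0 < tau -> (forall i j, tau <= nu i j) -> (forall i j, nu i j <= 1) ->
  g <= \sum_i \sum_j `|P1 i j / (\sum_i \sum_j P1 i j) - P2 i j / (\sum_i \sum_j P2 i j)| ->
  tau * g / 2 <=
  \sum_i \sum_j `|P1 i j * nu i j / (\sum_i \sum_j P1 i j * nu i j)
                 - P2 i j * nu i j / (\sum_i \sum_j P2 i j * nu i j)|.
Proof.
move=> p1 p2 u1 u2 t0 nt n1 hg.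
set U1 := \sum_i \sum_j P1 i j in u1 hg *.
set U2 := \sum_i \sum_j P2 i j in u2 hg *.
pose x i j := P1 i j / U1. pose y i j := P2 i j / U2.
have x0 i j : 0 <= x i j by rewrite divr_ge0 // ltW.
have y0 i j : 0 <= y i j by rewrite divr_ge0 // ltW.
have sx : \sum_i \sum_j x i j = 1.
  rewrite (eq_bigr (fun i => (\sum_j P1 i j) / U1)); first by rewrite -mulr_suml divff // lt0r_neq0.
  by move=> i _; rewrite mulr_suml.
have sy : \sum_i \sum_j y i j = 1.
  rewrite (eq_bigr (fun i => (\sum_j P2 i j) / U2)); first by rewrite -mulr_suml divff // lt0r_neq0.
  by move=> i _; rewrite mulr_suml.
have Z1 : \sum_i \sum_j x i j * nu i j = (\sum_i \sum_j P1 i j * nu i j) / U1.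
  rewrite mulr_suml; apply: eq_bigr => i _; rewrite mulr_suml; apply: eq_bigr => j _.
  by rewrite /x mulrAC.
have Z2 : \sum_i \sum_j y i j * nu i j = (\sum_i \sum_j P2 i j * nu i j) / U2.
  rewrite mulr_suml; apply: eq_bigr => i _; rewrite mulr_suml; apply: eq_bigr => j _.
  by rewrite /y mulrAC.
have z1 : 0 < \sum_i \sum_j P1 i j * nu i j.
  apply: (lt_le_trans (mulr_gt0 t0 u1)); rewrite /U1 mulr_sumr; apply: ler_sum => i _.
  rewrite mulr_sumr; apply: ler_sum => j _; rewrite mulrC; exact: ler_wpM2l.
have z2 : 0 < \sum_i \sum_j P2 i j * nu i j.
  apply: (lt_le_trans (mulr_gt0 t0 u2)); rewrite /U2 mulr_sumr; apply: ler_sum => i _.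
  rewrite mulr_sumr; apply: ler_sum => j _; rewrite mulrC; exact: ler_wpM2l.
have := @key x y nu tau x0 y0 sx sy t0 nt n1; rewrite Z1 Z2 => h.
have -> : \sum_i \sum_j `|P1 i j * nu i j / (\sum_i \sum_j P1 i j * nu i j) -
     P2 i j * nu i j / (\sum_i \sum_j P2 i j * nu i j)| =
  \sum_i \sum_j `|x i j * nu i j / ((\sum_i \sum_j P1 i j * nu i j) / U1) -
     y i j * nu i j / ((\sum_i \sum_j P2 i j * nu i j) / U2)|.
  apply: eq_bigr => i _; apply: eq_bigr => j _; congr `|_|; rewrite /x /y.
  by field; rewrite !lt0r_neq0.
apply: (le_trans _ h); rewrite -!mulrA; apply: ler_wpM2l; first exact: ltW.
by rewrite ler_pM2r // invr_gt0.
Qed.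
End K.

Theorem lemma6 (R : realFieldType) (S : nat -> finType) (A : finType)
    (H M K : nat) (p : forall k : nat, S k -> A -> S k.+1 -> R) (gamma : R)
    (hA : #|A| = K) (hM : forall k, (1 <= k <= H.+1)%N -> (#|S k| <= M)%N)
    (hp : is_kernel p H) (hsep : separable p H gamma)
    (k : nat) (hk : (1 <= k <= H)%N)
    (nu : S k -> A -> R) (tau : R) (htau : 0 < tau)
    (hnu : is_distr nu) (hnutau : forall s a, tau <= nu s a)
    (s1 s2 : S k.+1) (hs12 : s1 != s2)
    (hr1 : reachable p s1) (hr2 : reachable p s2) :
  tau * gamma / 2 <= bdist p nu s1 s2.
Proof.
have [p0 _] := hp k hk.
have [_ hg] := hsep.
have g := hg k hk s1 s2 hs12 hr1 hr2.
have [nu0 snu] := hnu.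
have n1 s a : nu s a <= 1 by rewrite -snu; exact: (@dsum_ge _ _ _ (fun s a => nu s a) s a nu0).
have [t1 [a1 pt1]] := hr1.
have [t2 [a2 pt2]] := hr2.
have u1 : 0 < \sum_s \sum_a p k s a s1 by exact: (@dsum_gt0 _ _ _ (fun s a => p k s a s1) _ _ (fun s a => p0 s a s1) pt1).
have u2 : 0 < \sum_s \sum_a p k s a s2 by exact: (@dsum_gt0 _ _ _ (fun s a => p k s a s2) _ _ (fun s a => p0 s a s2) pt2).
have cS : (0 < #|S k|)%N by apply/card_gt0P; exists t1.
have cA : (0 < #|A|)%N by apply/card_gt0P; exists a1.
have un : unif R (S:=S) (A:=A) (k:=k) t1 a1 != 0.
  by rewrite /unif invr_eq0 pnatr_eq0 -lt0n muln_gt0 cS cA.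
apply: (@keyP _ _ _ (fun s a => p k s a s1) (fun s a => p k s a s2)) => //.
apply: (le_trans g); rewrite /bdist le_eqVlt; apply/orP; left; apply/eqP.
apply: eq_bigr => s _; apply: eq_bigr => a _; congr `|_|; rewrite /bwd.
have E (s' : S k.+1) : \sum_t \sum_c p k t c s' * unif R (S:=S) (A:=A) (k:=k) t c
   = (\sum_t \sum_c p k t c s') * unif R (S:=S) (A:=A) (k:=k) t1 a1.
  by rewrite mulr_suml; apply: eq_bigr => t _; rewrite mulr_suml.
rewrite !E; rewrite /unif in un *; field.
by rewrite !lt0r_neq0 // ltr0n.
Qed.
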